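(* Let $(G,N,\theta)_{\mathcal{H}}$ be a modular $\mathcal{H}$-triple with $E=\mathbb{F}_p[\theta]$, $m=\theta(1)$, let $X:N\to\mathrm{GL}_m(E)=A^\times$ be a representation affording $\theta$ realized over $E$, let $A=\mathrm{M}_m(E)$ be the $G$-algebra associated with $(G,N,\theta)_{\mathcal{H}}$ and $X$, and let $\iota:A\to\mathrm{M}_{ms}(\mathbb{F}_p)$ be a unitary $\mathbb{F}_p$-algebra embedding, where $s=[E:\mathbb{F}_p]$. Then there is a function $Y:G\to\mathrm{GL}_{ms}(\mathbb{F}_p)$ such that (1) $Y(g)^{-1}\iota(x)Y(g)=\iota(x^g)$ for all $x\in A$, $g\in G$; (2) $Y(n)=\iota(X(n))$ for all $n\in N$; (3) $Y(gn)=Y(g)Y(n)$ and $Y(ng)=Y(n)Y(g)$ for all $n\in N$, $g\in G$.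
   Context: $p$ is a prime; $F$ a sufficiently large finite field of characteristic $p$, residue field of a $p$-modular system $(\mathcal{K},\mathcal{O},F)$; $\mathcal{H}$ a group of automorphisms of $\mathcal{K}$ preserving $\mathcal{O}$, acting on $F$ and inducing all automorphisms of $F$. A modular $\mathcal{H}$-triple $(G,N,\theta)_{\mathcal{H}}$: $N\trianglelefteq G$ finite, $\theta\in\mathrm{IBr}(N)$ with $G$-stable $\mathcal{H}$-orbit. $\mathbb{F}_p[\theta]$: subfield of $F$ generated over $\mathbb{F}_p$ by the reductions of the values of $\theta$. The $G$-algebra associated with $(G,N,\theta)_{\mathcal{H}}$ and $X$: for $g\in G$ let $\sigma_g\in\mathrm{Gal}(E/\mathbb{F}_p)$ be the unique element such that $n\mapsto X(gng^{-1})^{\sigma_g}$ (entrywise) affords $\theta$ (equivalently the restriction to $E$ of any $\tau\in\mathcal{H}$ with $\theta^\tau=\theta^{g^{-1}}$, $\theta^{g^{-1}}(n)=\theta(g^{-1}ng)$), choose $T_g\in\mathrm{GL}_m(E)$ with $X(gng^{-1})^{\sigma_g}=T_gX(n)T_g^{-1}$ for all $n\in N$, and let $G$ act on $A=\mathrm{M}_m(E)$ by $x^g=T_g^{-1}x^{\sigma_g}T_g$; this is a right action by $\mathbb{F}_p$-algebra automorphisms, with $X(n)^g=X(g^{-1}ng)$ and $(zx)^g=z^{\sigma_g}x^g$ for $z\in E$. *)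

(* Defs.v *)
From HB Require Import structures.
From mathcomp Require Import all_boot all_order all_algebra all_fingroup all_solvable all_field all_character.
Set Implicit Arguments. Unset Strict Implicit. Unset Printing Implicit Defensive.
Import GRing.Theory.
Local Open Scope ring_scope.

Definition galg_act (E : fieldType) (gT : finGroupType) (m : nat)
  (sigma : gT -> {rmorphism E -> E}) (T : gT -> 'M[E]_m) (g : gT)
  (x : 'M[E]_m) : 'M[E]_m :=
  invmx (T g) *m map_mx (sigma g) x *m T g.

(* Main.v *)
Require Import Defs.
From HB Require Import structures.
From mathcomp Require Import all_boot all_order all_algebra all_fingroup all_solvable all_field all_character.
Set Implicit Arguments. Unset Strict Implicit. Unset Printing Implicit Defensive.
Import GRing.Theory.
Local Open Scope ring_scope.


Lemma rows_eq (R : pzSemiRingType) (m n : nat) (A B : 'M[R]_(m, n)) :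
  (forall v : 'rV_m, v *m A = v *m B) -> A = B.
Proof. by move=> H; apply/row_matrixP => i; rewrite !rowE H. Qed.

Lemma add_sum (U V : zmodType) (f : U -> V) (fD : forall a b, f (a + b) = f a + f b)
  (I : Type) (r : seq I) (F : I -> U) : f (\sum_(i <- r) F i) = \sum_(i <- r) f (F i).
Proof.
have f0 : f 0 = 0 by apply/(addrI (f 0)); rewrite -fD !addr0.
by apply: (big_morph f fD f0).
Qed.

Lemma add_muln (U V : zmodType) (f : U -> V) (fD : forall a b, f (a + b) = f a + f b)
  (z : U) (n : nat) : f (z *+ n) = f z *+ n.
Proof.
have f0 : f 0 = 0 by apply/(addrI (f 0)); rewrite -fD !addr0.
by elim: n => [|n IH]; rewrite ?mulr0n // !mulrS fD IH.
Qed.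

Lemma Fp_scale (p n : nat) (a : 'F_p) (w : 'rV['F_p]_n) : prime p -> a *: w = w *+ (a : nat).
Proof. move=> pp. by rewrite -scaler_nat natr_Zp. Qed.
Lemma lin_ext (p : nat) (E : finFieldType) (k n : nat)
  (f h : 'rV[E]_k -> 'rV['F_p]_n) : prime p ->
  (forall a b, f (a + b) = f a + f b) -> (forall a b, h (a + b) = h a + h b) ->
  injective f -> (forall v, exists z, f z = v) ->
  exists Y, forall z, f z *m Y = h z.
Proof.
move=> pp fD hD finj fsurj.
have zi : forall i : 'I_n, {z | f z == 'e_i}.
  move=> i; apply: sigW; have [z hz] := fsurj 'e_i; exists z; exact/eqP.
pose z_ i := sval (zi i).
have fz i : f (z_ i) = 'e_i by apply/eqP; exact: (svalP (zi i)).
exists (\matrix_i h (z_ i)) => z.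
have zw : z = \sum_i z_ i *+ (f z 0 i : nat).
  apply: finj; rewrite (add_sum fD) [LHS](row_sum_delta (f z)).
  by apply: eq_bigr => i _; rewrite (add_muln fD) fz Fp_scale.
rewrite [in RHS]zw (add_sum hD) mulmx_sum_row; apply: eq_bigr => i _.
by rewrite (add_muln hD) rowK Fp_scale.
Qed.
Lemma fmap (p : nat) (E : finFieldType) (k s : nat)
  (phi : 'M[E]_k.+1 -> 'M['F_p]_(k.+1 * s)) : prime p -> #|E| = (p ^ s)%N ->
  (forall a b, phi (a + b) = phi a + phi b) -> (forall a b, phi (a *m b) = phi a *m phi b) ->
  injective phi ->
  exists f : 'rV[E]_k.+1 -> 'rV['F_p]_(k.+1 * s),
    [/\ forall a b, f (a + b) = f a + f b, forall z x, f z *m phi x = f (z *m x),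
        injective f & forall v, exists z, f z = v].
Proof.
move=> pp cE phiD phiM phiI.
have phi0 : phi 0 = 0 by apply/(addrI (phi 0)); rewrite -phiD !addr0.
pose e11 : 'M[E]_k.+1 := delta_mx 0 0.
have nz : phi e11 != 0.
  apply/eqP => h; have : e11 = 0 by apply: phiI; rewrite h phi0.
  by move/matrixP/(_ 0 0); rewrite !mxE eqxx /=; apply/eqP; exact: oner_neq0.
have [i ui] : exists i, row i (phi e11) != 0.
  apply/existsP; apply: contraR nz => /existsPn h; apply/eqP/row_matrixP => i.
  by rewrite row0; apply/eqP; move: (h i); rewrite negbK.
pose u := row i (phi e11).
have uu : u *m phi e11 = u by rewrite /u rowE -mulmxA -phiM mul_delta_mx.
pose R (z : 'rV[E]_k.+1) : 'M[E]_k.+1 := (delta_mx 0 0 : 'cV_k.+1) *m z.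
pose f z := u *m phi (R z).
have fD : forall a b, f (a + b) = f a + f b by move=> a b; rewrite /f /R mulmxDr phiD mulmxDr.
have fM : forall z x, f z *m phi x = f (z *m x) by move=> z x; rewrite /f /R -mulmxA -phiM mulmxA.
have fN : forall b, f (- b) = - f b.
  by move=> b; apply/(addrI (f b)); rewrite -fD !subrr /f /R mulmx0 phi0 mulmx0.
have f0d : forall d, f d = 0 -> d = 0.
  move=> d fd; apply/eqP; apply/negPn/negP => dnz.
  have [j dj] : exists j, d 0 j != 0.
    apply/existsP; apply: contraR dnz => /existsPn h; apply/eqP/matrixP => x y.
    rewrite (ord1 x) mxE; move: (h y); rewrite negbK => /eqP //.
  pose x : 'M[E]_k.+1 := (d 0 j)^-1 *: delta_mx j 0.
  have dx : d *m x = delta_mx 0 0.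
    rewrite /x -scalemxAr -(mul_delta_mx (0 : 'I_1)) mulmxA -colE.
    rewrite [col j d]mx11_scalar mul_scalar_mx scalerA mxE mulVf //.
    by rewrite scale1r.
  have : f d *m phi x = u by rewrite fM dx /f /R mul_delta_mx.
  by rewrite fd mul0mx => /eqP; rewrite eq_sym (negbTE ui).
have fI : injective f.
  move=> a b fab; apply/eqP; rewrite -subr_eq0; apply/eqP/f0d.
  by rewrite fD fN fab subrr.
exists f; split => // v.
have : v \in codom f.
  apply: inj_card_onto => //; rewrite !card_mx card_Fp // cE -expnM !mul1n mulnC.
  by [].
by case/codomP => z ->; exists z.
Qed.

Lemma intertw (p : nat) (E : finFieldType) (k s : nat)
  (phi psi : 'M[E]_k.+1 -> 'M['F_p]_(k.+1 * s)) : prime p -> #|E| = (p ^ s)%N ->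
  (forall a b, phi (a + b) = phi a + phi b) -> (forall a b, phi (a *m b) = phi a *m phi b) ->
  injective phi ->
  (forall a b, psi (a + b) = psi a + psi b) -> (forall a b, psi (a *m b) = psi a *m psi b) ->
  injective psi ->
  exists2 Y, Y \in unitmx & forall x, phi x *m Y = Y *m psi x.
Proof.
move=> pp cE phiD phiM phiI psiD psiM psiI.
have [f [fD fM fI fS]] := fmap pp cE phiD phiM phiI.
have [g [gD gM gI gS]] := fmap pp cE psiD psiM psiI.
have [Y hY] := lin_ext pp fD gD fI fS.
have [Y' hY'] := lin_ext pp gD fD gI gS.
exists Y.
  suff : Y *m Y' = 1%:M by case/mulmx1_unit.
  apply: rows_eq => v; have [z <-] := fS v.
  by rewrite mulmxA hY hY' mulmx1.
move=> x; apply: rows_eq => v; have [z <-] := fS v.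
by rewrite mulmxA fM hY mulmxA hY gM.
Qed.
Lemma core (E : finFieldType) (gT : finGroupType) (N : {group gT}) (m : nat)
  (X : mx_representation E N m) (s1 s2 : {rmorphism E -> E}) (A1 A2 : 'M[E]_m) :
  mx_absolutely_irreducible X ->
  (forall S : {pred E}, GRing.divring_closed S ->
     (forall n, n \in N -> \tr (X n) \in S) -> forall z, z \in S) ->
  A1 \in unitmx -> A2 \in unitmx ->
  (forall n, n \in N -> invmx A2 *m map_mx s2 (X n) *m A2 = invmx A1 *m map_mx s1 (X n) *m A1) ->
  forall x, invmx A2 *m map_mx s2 x *m A2 = invmx A1 *m map_mx s1 x *m A1.
Proof.
move=> absX HS uA1 uA2 H.
have trc (A B : 'M[E]_m) : A \in unitmx -> \tr (invmx A *m B *m A) = \tr B.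
  by move=> uA; rewrite mxtrace_mulC mulmxA mulmxV // mul1mx.
have s12 : s1 =1 s2.
  move=> z; pose S := [pred z | s1 z == s2 z]; apply/eqP.
  have: z \in S; last by [].
  apply: HS.
    split; first by rewrite inE !rmorph1.
      by move=> u v; rewrite !inE => /eqP hu /eqP hv; rewrite !rmorphB hu hv.
    by move=> u v; rewrite !inE => /eqP hu /eqP hv; rewrite !fmorph_div hu hv.
  move=> n nN; rewrite inE -!trace_map_mx -(trc A1 _ uA1) -(trc A2 (map_mx s2 _) uA2) H //.
have em : forall M : 'M[E]_m, map_mx s1 M = map_mx s2 M.
  by move=> M; apply/matrixP => i j; rewrite !mxE s12.
move=> x; rewrite em.
pose D := A2 *m invmx A1.
have eA2 : A2 = D *m A1 by rewrite /D mulmxKV.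
have Dc : forall n, n \in N -> map_mx s2 (X n) *m D = D *m map_mx s2 (X n).
  move=> n nN; have := H n nN; rewrite em => h.
  have := congr1 (fun M => A2 *m M *m invmx A1) h.
  by rewrite !mulmxA mulmxV // mul1mx mulmxK // => ->.
have [t s2K tK] : bijective s2 by apply: injF_bij; exact: fmorph_inj.
pose D' := map_mx t D.
have eD : D = map_mx s2 D' by apply/matrixP => i j; rewrite !mxE tK.
have : centgmx X D'.
  apply/centgmxP => n nN; apply: (map_mx_inj (f := s2)).
  by rewrite !map_mxM -eD Dc.
move/(mx_abs_irr_cent_scalar absX)/is_scalar_mxP => [a Da].
rewrite Da map_scalar_mx in eD.
rewrite {2}eA2 eD mulmxA -(mulmxA _ _ (_%:M)) scalar_mxC !mulmxA.
by rewrite -eD /D mulmxA mulVmx // mul1mx.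
Qed.
Lemma galg_props (E : fieldType) (gT : finGroupType) (m : nat)
  (sigma : gT -> {rmorphism E -> E}) (T : gT -> 'M[E]_m) (g : gT) :
  T g \in unitmx ->
  [/\ forall a b, galg_act sigma T g (a + b) = galg_act sigma T g a + galg_act sigma T g b,
      forall a b, galg_act sigma T g (a *m b) = galg_act sigma T g a *m galg_act sigma T g b
    & injective (galg_act sigma T g)].
Proof.
move=> uT; rewrite /galg_act; split.
- by move=> a b; rewrite map_mxD mulmxDr mulmxDl.
- by move=> a b; rewrite map_mxM !mulmxA mulmxK.
move=> a b h; apply: (map_mx_inj (f := sigma g)).
have := congr1 (fun M => T g *m M *m invmx (T g)) h.
by rewrite !mulmxA mulmxV // !mul1mx !mulmxK.
Qed.

Theorem mainTheorem8 (p : nat) (E : finFieldType) (gT : finGroupType)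
  (G N : {group gT}) (m s : nat) (X : mx_representation E N m)
  (sigma : gT -> {rmorphism E -> E}) (T : gT -> 'M[E]_m)
  (iota : {rmorphism 'M[E]_m -> 'M['F_p]_(m * s)}) :
  prime p -> p \in [pchar E] -> #|E| = (p ^ s)%N ->
  (N <| G)%g ->
  mx_absolutely_irreducible X ->
  (forall S : {pred E}, GRing.divring_closed S ->
     (forall n, n \in N -> (p^'.-elt n)%g -> \tr (X n) \in S) ->
     forall z : E, z \in S) ->
  (forall g, g \in G -> T g \in unitmx) ->
  (forall g n, g \in G -> n \in N ->
     map_mx (sigma g) (X (n ^ g^-1)%g) = T g *m X n *m invmx (T g)) ->
  injective iota ->
  exists Y : gT -> 'M['F_p]_(m * s),
    [/\ forall g, g \in G -> Y g \in unitmx,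
        forall g x, g \in G ->
          invmx (Y g) *m iota x *m Y g = iota (galg_act sigma T g x),
        forall n, n \in N -> Y n = iota (X n)
      & forall g n, g \in G -> n \in N ->
          Y (g * n)%g = Y g *m Y n /\ Y (n * g)%g = Y n *m Y g].
Proof.
move=> pp pE cE nNG absX HE uT HT iI.
case: m X T iota absX HE uT HT iI => [|k] X T iota absX HE uT HT iI.
  by case/andP: absX.
have HE' : forall S : {pred E}, GRing.divring_closed S ->
     (forall n, n \in N -> \tr (X n) \in S) -> forall z : E, z \in S.
  by move=> S dS hS; apply: HE => // n nN _; exact: hS.
have sNG : N \subset G := normal_sub nNG.
have Nn : forall g n, g \in G -> n \in N -> (n ^ g)%g \in N.
  by move=> g n gG nN; rewrite memJ_norm // (subsetP (normal_norm nNG)).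
have iM : forall a b, iota (a *m b) = iota a *m iota b.
  by move=> a b; rewrite mulmxE rmorphM.
have iD : forall a b, iota (a + b) = iota a + iota b by move=> a b; rewrite rmorphD.
have actX : forall r n, r \in G -> n \in N -> galg_act sigma T r (X n) = X (n ^ r)%g.
  move=> r n rG nN; rewrite /galg_act.
  have := HT r (n ^ r)%g rG (Nn r n rG nN); rewrite conjgK => ->.
  by rewrite !mulmxA mulmxKV ?uT // mulVmx ?uT // mul1mx.
pose rep g := repr (N :* g)%g.
have repP : forall g, g \in G -> (rep g \in G) && ((rep g)^-1 * g \in N)%g.
  move=> g gG; have := mem_repr_rcoset N g; rewrite -/(rep g) mem_rcoset => a.
  have rG : rep g \in G by rewrite -(mulgKV g (rep g)) groupM // (subsetP sNG).
  rewrite rG /=; have -> : ((rep g)^-1 * g = ((rep g * g^-1)^-1) ^ g)%g.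
    by rewrite conjgE invMg invgK !mulgA mulVg mul1g.
  by rewrite Nn // groupV.
have rep1 : forall n, n \in N -> rep n = 1%g.
  by move=> n nN; rewrite /rep rcoset_id // repr_group.
have repR : forall g n, g \in G -> n \in N -> rep (g * n)%g = rep g.
  move=> g n gG nN; rewrite /rep.
  have -> : (g * n = (n ^ g^-1) * g)%g by rewrite conjgE invgK !mulgA mulgKV.
  by rewrite rcosetM rcoset_id // Nn // groupV.
have repL : forall g n, n \in N -> rep (n * g)%g = rep g.
  by move=> g n nN; rewrite /rep rcosetM rcoset_id.
pose sig' r : {rmorphism E -> E} := if r \in N then (idfun : {rmorphism E -> E}) else sigma r.
pose T' r : 'M[E]_k.+1 := if r \in N then 1%:M else T r.
pose tw r x := galg_act sig' T' r x.
have twN : forall r x, r \in N -> tw r x = x.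
  move=> r x rN; rewrite /tw /galg_act /sig' /T' rN invmx1 mul1mx mulmx1.
  by apply/matrixP => i j; rewrite mxE.
have twG : forall r x, r \notin N -> tw r x = galg_act sigma T r x.
  by move=> r x rN; rewrite /tw /galg_act /sig' /T' (negbTE rN).
have uT' : forall r, r \in G -> T' r \in unitmx.
  by move=> r rG; rewrite /T'; case: ifP => _; rewrite ?unitmx1 ?uT.
have twX : forall g n, g \in G -> n \in N -> tw (rep g) (X n) = X (n ^ rep g)%g.
  move=> g n gG nN; have /andP[rG r1N] := repP g gG.
  case: (boolP (rep g \in N)) => rN; last by rewrite twG // actX.
  have gN : g \in N by rewrite -(mulKVg (rep g) g) groupM.
  by rewrite twN // rep1 // conjg1.
have Y0ex : forall r, r \in G -> exists Y,
    (Y \in unitmx) && [forall x, iota x *m Y == Y *m iota (tw r x)].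
  move=> r rG; case: (boolP (r \in N)) => rN.
    by exists 1%:M; rewrite unitmx1; apply/forallP => x; rewrite twN // mulmx1 mul1mx.
  have [ad mu inj] := @galg_props _ _ _ sigma T r (uT r rG).
  have [Y uY HY] := @intertw p E k s iota (fun x => iota (galg_act sigma T r x))
    pp cE iD iM iI (fun a b => etrans (congr1 iota (ad a b)) (iD _ _))
    (fun a b => etrans (congr1 iota (mu a b)) (iM _ _))
    (fun a b h => inj a b (iI _ _ h)).
  by exists Y; rewrite uY; apply/forallP => x; rewrite twG // HY.
pose Y0 r := if r \in N then 1%:M else
  odflt 1%:M [pick Y | (Y \in unitmx) && [forall x, iota x *m Y == Y *m iota (tw r x)]].
have Y0P : forall r, r \in G ->
    Y0 r \in unitmx /\ forall x, iota x *m Y0 r = Y0 r *m iota (tw r x).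
  move=> r rG; rewrite /Y0; case: (boolP (r \in N)) => rN.
    by split; [exact: unitmx1 | move=> x; rewrite twN // mulmx1 mul1mx].
  case: pickP => [Y /andP[uY /forallP HY] | none].
    by split => // x; apply/eqP; exact: HY.
  by have [Y hY] := Y0ex r rG; rewrite none in hY.
have iXM : forall a b, a \in N -> b \in N -> iota (X (a * b)%g) = iota (X a) *m iota (X b).
  by move=> a b aN bN; rewrite repr_mxM // iM.
have iXu : forall n, n \in N -> iota (X n) \in unitmx.
  move=> n nN; suff: iota (X n) *m iota (X n^-1)%g = 1%:M by case/mulmx1_unit.
  by rewrite -iXM ?groupV // mulgV repr_mx1 rmorph1.
pose Y g := Y0 (rep g) *m iota (X ((rep g)^-1 * g)%g).
have YN : forall n, n \in N -> Y n = iota (X n).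
  by move=> n nN; rewrite /Y rep1 // /Y0 group1 mul1mx invg1 mul1g.
have Yu : forall g, g \in G -> Y g \in unitmx.
  move=> g gG; have /andP[rG nN] := repP g gG; have [u0 _] := Y0P _ rG.
  by rewrite unitmx_mul u0 iXu.
have key : forall g x, g \in G ->
    X ((rep g)^-1 * g)%g *m galg_act sigma T g x = tw (rep g) x *m X ((rep g)^-1 * g)%g.
  move=> g x gG; have /andP[rG n0N] := repP g gG.
  set r := rep g in rG n0N *; set n0 := (r^-1 * g)%g in n0N *.
  have uX : X n0 \in unitmx by apply: repr_mx_unit.
  have uA1 : T' r *m X n0 \in unitmx by rewrite unitmx_mul uT' // uX.
  have iA1 : invmx (T' r *m X n0) = X (n0^-1)%g *m invmx (T' r).
    have h : (T' r *m X n0) *m (X (n0^-1)%g *m invmx (T' r)) = 1%:M.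
      by rewrite -mulmxA (mulmxA (X n0)) -repr_mxM ?groupV // mulgV repr_mx1 mul1mx mulmxV ?uT'.
    by rewrite -[LHS]mulmx1 -h mulKmx.
  have C := @core E gT N k.+1 X (sig' r) (sigma g) (T' r *m X n0) (T g) absX HE' uA1 (uT g gG).
  have C2 : forall x, galg_act sigma T g x = invmx (T' r *m X n0) *m map_mx (sig' r) x *m (T' r *m X n0).
    apply: C => n nN; rewrite [LHS](actX g n gG nN) iA1.
    have := twX g n gG nN; rewrite -/r /tw /galg_act => tw1.
    rewrite !mulmxA -(mulmxA _ (invmx _)) -(mulmxA _ (_ *m map_mx _ _)) -(mulmxA _ (map_mx _ _)).
    have hr : (n ^ r)%g \in N := Nn r n rG nN.
    rewrite (mulmxA (invmx _)) tw1 -(repr_mxM X (groupVr n0N) hr).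
    rewrite -(repr_mxM X (groupM (groupVr n0N) hr) n0N).
    by congr (X _); rewrite -mulgA -conjgE -conjgM /n0 mulKVg.
  have e1 : T' r *m X n0 *m galg_act sigma T g x = map_mx (sig' r) x *m (T' r *m X n0).
    by rewrite C2 !mulmxA mulmxV // mul1mx.
  have e2 := congr1 (mulmx (invmx (T' r))) e1.
  rewrite -[T' r *m X n0 *m _]mulmxA mulKmx ?uT' // in e2.
  by rewrite e2 /tw /galg_act !mulmxA.
exists Y; split => //.
- move=> g x gG; have /andP[rG n0N] := repP g gG; have [u0 H0] := Y0P _ rG.
  suff h : iota x *m Y g = Y g *m iota (galg_act sigma T g x).
    by rewrite -mulmxA h mulKmx ?Yu.
  by rewrite /Y mulmxA H0 -mulmxA -iM key // (iM (tw (rep g) x)) mulmxA.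
move=> g n gG nN; have /andP[rG n0N] := repP g gG; have [u0 H0] := Y0P _ rG.
split.
  by rewrite (YN n nN) /Y repR // mulgA iXM // mulmxA.
rewrite (YN n nN) /Y repL //.
have hr : (n ^ rep g)%g \in N := Nn _ n rG nN.
have -> : ((rep g)^-1 * (n * g) = (n ^ rep g) * ((rep g)^-1 * g))%g.
  by rewrite conjgE !mulgA mulgK.
by rewrite iXM // mulmxA [RHS]mulmxA H0 twX.
Qed.
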